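(* Let $n$ be a positive integer, let $\lambda$ be an eigenvalue of the Fibonacci--Redheffer matrix $F_R(n)$, and let $\mathbf{x}=[x_i]_{i=1}^n$ be a corresponding eigenvector. Then $x_1\neq 0$.
   Context: The Fibonacci numbers are $F_1=F_2=1$, $F_n=F_{n-1}+F_{n-2}$ for $n\ge 3$. The Fibonacci--Redheffer matrix $F_R(n)=[F_R(i,j)]_{i,j=1}^n$ is defined by $F_R(i,j)=1$ if $j=1$; $F_R(i,j)=F_i$ if $i\mid j$; and $F_R(i,j)=0$ otherwise. An eigenvector for $\lambda$ is a nonzero vector $\mathbf{x}$ with $(F_R(n)-\lambda I_n)\mathbf{x}=\mathbf{0}$. *)

(* Defs.v *)
From HB Require Import structures.
From mathcomp Require Import all_boot all_order all_algebra.
Set Implicit Arguments. Unset Strict Implicit. Unset Printing Implicit Defensive.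
Import GRing.Theory Num.Theory.
Local Open Scope ring_scope.

Fixpoint fib (k : nat) : nat :=
  match k with
  | 0 => 0
  | 1 => 1
  | (m.+1 as k').+1 => fib k' + fib m
  end.

(* Fibonacci--Redheffer matrix of size n; the 0-based index i : 'I_n stands
   for the paper's 1-based index i+1. *)
Definition FR (R : nzRingType) (n : nat) : 'M[R]_n :=
  \matrix_(i < n, j < n)
    if (j.+1 == 1)%N then 1
    else if (i.+1 %| j.+1)%N then (fib i.+1)%:R else 0.

(* Main.v *)
Require Import Defs.
From HB Require Import structures.
From mathcomp Require Import all_boot all_order all_algebra.
From mathcomp Require Import zify.
Import GRing.Theory Num.Theory.
Local Open Scope ring_scope.

Lemma fib_pos k : (0 < fib k.+1)%N.
Proof.
elim/ltn_ind: k => [[|[|k]]] // IH /=.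
by rewrite addn_gt0 (IH k.+1).
Qed.

Lemma fibS k : fib k.+3 = (fib k.+2 + fib k.+1)%N.
Proof. by []. Qed.

Lemma fib_lt a b : (2 <= a)%N -> (a < b)%N -> (fib a < fib b)%N.
Proof.
move=> ha; elim: b => // b IH.
rewrite ltnS leq_eqVlt => /orP [/eqP <-|hb].
- case: a ha {IH} => [|[|a]] // _.
  by rewrite fibS -[X in (X < _)%N]addn0 ltn_add2l fib_pos.
- apply: (ltn_trans (IH hb)).
  case: b IH hb => [|[|b]] _ hb; try lia.
  by rewrite fibS -[X in (X < _)%N]addn0 ltn_add2l fib_pos.
Qed.

Theorem lemma2 (R : numClosedFieldType) (n : nat) (lambda : R)
    (x : 'cV[R]_n.+1) :
  x != 0 -> (FR R n.+1 - lambda%:M) *m x = 0 -> x ord0 ord0 != 0.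
Proof.
move=> xnz H; apply/negP => /eqP x0.
have E : FR R n.+1 *m x = lambda *: x.
  by apply/eqP; rewrite -subr_eq0 -mul_scalar_mx -mulmxBl H.
have Ei (i : 'I_n.+1) : \sum_(j < n.+1 | (i.+1 %| j.+1)%N) (fib i.+1)%:R * x j ord0 = lambda * x i ord0.
  have := congr1 (fun M : 'cV[R]_n.+1 => M i ord0) E; rewrite !mxE => <-.
  rewrite big_mkcond; apply: eq_bigr => j _; rewrite mxE.
  case: (eqVneq j ord0) => [->|jn0]; first by rewrite x0 !mulr0; case: ifP.
  have -> : (j.+1 == 1)%N = false by rewrite eqSS; apply/negbTE; move: jn0; rewrite -val_eqE.
  by case: ifP => _; rewrite ?mul0r.
have [i0 xi0] : exists i, x i ord0 != 0.
  apply/existsP; move: xnz; apply: contraR; rewrite negb_exists => /forallP h.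
  by apply/eqP/matrixP => i j; rewrite !mxE (ord1 j); apply/eqP; move/negPn: (h i).
case: (@arg_maxnP _ i0 (fun i => x i ord0 != 0) val xi0) => m xm mmax.
have m0 : (0 < m)%N.
  by rewrite lt0n; apply: contra xm => /eqP m0; apply/eqP; rewrite -x0; congr (x _ _); apply/val_inj.
have lam : lambda = (fib m.+1)%:R.
  have := Ei m; rewrite (bigD1 m) // big1 ?addr0.
    by move=> h; apply: (mulIf xm); rewrite -h; exact: addr0.
  move=> j /andP [hd jm]; case: (eqVneq (x j ord0) 0) => [->|xj]; first by rewrite mulr0.
  have := mmax j xj; have := dvdn_leq (ltn0Sn _) hd.
  by rewrite -val_eqE in jm; move: jm => /= jm; lia.
set y := fun j => x j ord0 / x m ord0.
have ym : y m = 1 by rewrite /y divff.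
have step (j : 'I_n.+1) : (forall k : 'I_n.+1, (j < k)%N -> (0 < k)%N -> 0 <= y k) -> (0 < j)%N -> 0 <= y j.
  move=> IH j0.
  case: (eqVneq (x j ord0) 0) => [xj0|xj]; first by rewrite /y xj0 mul0r.
  have hjm := mmax j xj.
  case: (eqVneq j m) => [->|jm]; first by rewrite ym ler01.
  have ltjm : (j < m)%N by move: jm; rewrite -val_eqE /=; move: hjm => /= hjm; lia.
  set T := \sum_(k < n.+1 | (j.+1 %| k.+1)%N && (k != j)) y k.
  have T0 : 0 <= T.
    apply: sumr_ge0 => k /andP [hd kj]; apply: IH.
      by have := dvdn_leq (ltn0Sn _) hd; move: kj; rewrite -val_eqE /=; lia.
    by have := dvdn_leq (ltn0Sn _) hd; move: kj; rewrite -val_eqE /=; lia.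
  have h := Ei j; rewrite (bigD1 j) ?dvdnn // in h.
  have eq : (fib j.+1)%:R * y j + (fib j.+1)%:R * T = (fib m.+1)%:R * y j.
    have := congr1 (fun v => v / x m ord0) h.
    rewrite mulrDl mulr_suml -lam /T /y mulr_sumr -!mulrA => <-; congr (_ + _).
    by apply: eq_bigr => k _; rewrite mulrA.
  have pos : 0 < (fib m.+1)%:R - (fib j.+1)%:R :> R.
    by rewrite subr_gt0 ltr_nat; apply: fib_lt => //.
  have -> : y j = (fib j.+1)%:R * T / ((fib m.+1)%:R - (fib j.+1)%:R).
    apply: (mulIf (lt0r_neq0 pos)); rewrite divfK ?(lt0r_neq0 pos) //.
    rewrite mulrBr [y j * _]mulrC -eq [y j * _]mulrC.
    by rewrite addrC addKr.
  by apply: divr_ge0; [apply: mulr_ge0 => //; apply: ler0n | apply: Order.POrderTheory.ltW].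
have ypos (j : 'I_n.+1) : (0 < j)%N -> 0 <= y j.
  suff: forall d (j : 'I_n.+1), (n - j <= d)%N -> (0 < j)%N -> 0 <= y j by apply; apply: leqnn.
  elim=> [|d IH] k hk; apply: step => l hl hl0; try apply: IH; have := ltn_ord l; lia.
have := Ei ord0; rewrite x0 mulr0 /= => /(congr1 (fun v => v / x m ord0)).
rewrite mul0r mulr_suml.
have -> : \sum_(j < n.+1 | (1 %| j.+1)%N) (fib 1)%:R * x j ord0 / x m ord0 = \sum_(j < n.+1) y j.
  apply: eq_big => [j|j _]; first by rewrite dvd1n.
  by rewrite (_ : (fib 1)%:R = 1 :> R) ?mul1r.
rewrite (bigD1 m) //= ym => /eqP; apply/negP; rewrite lt0r_neq0 //.
apply: ltr_wpDr; last by apply: ltr01.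
apply: sumr_ge0 => j _; case: (posnP j) => [j0|]; last by apply: ypos.
by rewrite /y (_ : j = ord0) ?x0 ?mul0r //; apply/val_inj.
Qed.
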